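(* For every $n\ge 1$, the $2$-structure $\mathscr{M}_n$ is terminating: for every discrete category $\mathscr{C}$, every infinite chain $t_1\xrightarrow{\alpha_1}t_2\xrightarrow{\alpha_2}t_3\to\cdots$ of morphisms in $\mathbb{F}_{\mathscr{C}}(\mathscr{M}_n)$ contains cofinitely many identity morphisms.
   Context: General framework: a $2$-structure $\langle\mathcal{F},\theta_{\mathcal{F}},\mathcal{T},\theta_{\mathcal{T}}\rangle$ consists of function symbols $\mathcal{F}$, term equations $\theta_{\mathcal{F}}$, labelled reduction rules $\mathcal{T}$ between congruence classes of terms, and equations $\theta_{\mathcal{T}}$ between reductions with equal source and target; over a category $\mathscr{C}$, reductions are generated from morphisms of $\mathscr{C}$ by function symbols, rule applications (with reductions substituted for the variables) and composition $\varphi\cdot\psi$ (diagrammatic order), and $\theta_{\mathcal{T}}$ always contains all instances of the identity, associativity, functoriality and naturality equations. $\mathbb{F}_{\mathscr{C}}(\mathcal{S})$ is the category whose objects are classes of terms over $\mathrm{Ob}(\mathscr{C})$ and whose morphisms are reductions modulo the congruence generated by $\theta_{\mathcal{T}}$. $\mathscr{M}_n$ (the $2$-structure for $n$-fold monoidal categories): binary function symbols $\otimes_1,\dots,\otimes_n$ and a nullary symbol $I$; term equations $A\otimes_i(B\otimes_iC)=(A\otimes_iB)\otimes_iC$, $A\otimes_iI=A$, $I\otimes_iA=A$ for $1\le i\le n$; for each $1\le i<j\le n$ a reduction rule (interchange) $\eta^{ij}_{A,B,C,D}:(A\otimes_jB)\otimes_i(C\otimes_jD)\to(A\otimes_iC)\otimes_j(B\otimes_iD)$;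 equations in $\theta_{\mathcal{T}}$ besides the mandatory ones: (internal unit) $\eta^{ij}_{A,B,I,I}=\eta^{ij}_{I,I,A,B}=1_{A\otimes_jB}$; (external unit) $\eta^{ij}_{A,I,B,I}=\eta^{ij}_{I,A,I,B}=1_{A\otimes_iB}$; (internal associativity) $(\eta^{ij}_{A,B,C,D}\otimes_i1_{E\otimes_jF})\cdot\eta^{ij}_{A\otimes_iC,B\otimes_iD,E,F}=(1_{A\otimes_jB}\otimes_i\eta^{ij}_{C,D,E,F})\cdot\eta^{ij}_{A,B,C\otimes_iE,D\otimes_iF}$; (external associativity) $\eta^{ij}_{A\otimes_jB,C,D\otimes_jE,F}\cdot(\eta^{ij}_{A,B,D,E}\otimes_j1_{C\otimes_iF})=\eta^{ij}_{A,B\otimes_jC,D,E\otimes_jF}\cdot(1_{A\otimes_iD}\otimes_j\eta^{ij}_{B,C,E,F})$; (giant hexagon) for $1\le i<j<k\le n$, as morphisms from $((A\otimes_kB)\otimes_j(C\otimes_kD))\otimes_i((E\otimes_kF)\otimes_j(G\otimes_kH))$ to $((A\otimes_iE)\otimes_j(C\otimes_iG))\otimes_k((B\otimes_iF)\otimes_j(D\otimes_iH))$: $(\eta^{jk}_{A,B,C,D}\otimes_i\eta^{jk}_{E,F,G,H})\cdot\eta^{ik}_{A\otimes_jC,B\otimes_jD,E\otimes_jG,F\otimes_jH}\cdot(\eta^{ij}_{A,C,E,G}\otimes_k\eta^{ij}_{B,D,F,H})=\eta^{ij}_{A\otimes_kB,C\otimes_kD,E\otimes_kF,G\otimes_kH}\cdot(\eta^{ik}_{A,B,E,F}\otimes_j\eta^{ik}_{C,D,G,H})\cdot\eta^{jk}_{A\otimes_iE,B\otimes_iF,C\otimes_iG,D\otimes_iH}$.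 *)

(* Defs.v *)
From mathcomp Require Import all_boot.
Set Implicit Arguments.
Unset Strict Implicit.
Unset Printing Implicit Defensive.

(* The 2-structure M_n over a discrete category C, whose set of objects is X.
   Tensor indices 1..n of the paper are represented by 'I_n (0..n-1). *)
Section Mn.
Variables (X : Type) (n : nat).

Inductive term : Type :=
  | Atom of X
  | Unit
  | Tens of 'I_n & term & term.

Inductive teq : term -> term -> Prop :=
  | teq_refl a : teq a a
  | teq_sym a b : teq a b -> teq b a
  | teq_trans a b c : teq a b -> teq b c -> teq a c
  | teq_tens i a a' b b' : teq a a' -> teq b b' -> teq (Tens i a b) (Tens i a' b')
  | teq_assoc i a b c : teq (Tens i a (Tens i b c)) (Tens i (Tens i a b) c)
  | teq_unitr i a : teq (Tens i a Unit) a
  | teq_unitl i a : teq (Tens i Unit a) a.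

(* Reductions: generated from the morphisms of C (identities 1_x, x in X, as C
   is discrete), by the function symbols (nullary I gives 1_I, binary ⊗_i),
   by applications of the interchange rule eta^{ij} with reductions substituted
   for its four variables, and by composition (diagrammatic order). *)
Inductive red : Type :=
  | RAtom of X
  | RUnit
  | RTens of 'I_n & red & red
  | REta of 'I_n & 'I_n & red & red & red & red
  | RComp of red & red.

Fixpoint src (r : red) : term :=
  match r with
  | RAtom x => Atom x
  | RUnit => Unit
  | RTens i f g => Tens i (src f) (src g)
  | REta i j a b c d => Tens i (Tens j (src a) (src b)) (Tens j (src c) (src d))
  | RComp f _ => src f
  end.

Fixpoint tgt (r : red) : term :=
  match r with
  | RAtom x => Atom x
  | RUnit => Unit
  | RTens i f g => Tens i (tgt f) (tgt g)
  | REta i j a b c d => Tens j (Tens i (tgt a) (tgt c)) (Tens i (tgt b) (tgt d))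
  | RComp _ g => tgt g
  end.

Fixpoint rid (t : term) : red :=
  match t with
  | Atom x => RAtom x
  | Unit => RUnit
  | Tens i a b => RTens i (rid a) (rid b)
  end.

(* well-formed (well-typed) reductions: eta^{ij} only for i < j, and
   composites only when the target and source agree as objects (classes). *)
Inductive wf : red -> Prop :=
  | wf_atom x : wf (RAtom x)
  | wf_unit : wf RUnit
  | wf_tens i f g : wf f -> wf g -> wf (RTens i f g)
  | wf_eta (i j : 'I_n) a b c d : (i < j)%N -> wf a -> wf b -> wf c -> wf d ->
      wf (REta i j a b c d)
  | wf_comp f g : wf f -> wf g -> teq (tgt f) (src g) -> wf (RComp f g).

Definition eta (i j : 'I_n) (A B C D : term) : red :=
  REta i j (rid A) (rid B) (rid C) (rid D).

(* The generating equations theta_T (plus the term equations lifted to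
   reductions).  Typing is imposed in [req] via [wf] of both sides. *)
Inductive ax : red -> red -> Prop :=
  | ax_idl A f : ax (RComp (rid A) f) f
  | ax_idr B f : ax (RComp f (rid B)) f
  | ax_assoc f g h : ax (RComp (RComp f g) h) (RComp f (RComp g h))
  | ax_funct i f f' g g' :
      ax (RTens i (RComp f f') (RComp g g')) (RComp (RTens i f g) (RTens i f' g'))
  | ax_natl i j a b c d :
      ax (REta i j a b c d)
         (RComp (RTens i (RTens j a b) (RTens j c d))
                (eta i j (tgt a) (tgt b) (tgt c) (tgt d)))
  | ax_natr i j a b c d :
      ax (REta i j a b c d)
         (RComp (eta i j (src a) (src b) (src c) (src d))
                (RTens j (RTens i a c) (RTens i b d)))
  | ax_tassoc i f g h : ax (RTens i f (RTens i g h)) (RTens i (RTens i f g) h)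
  | ax_tunitr i f : ax (RTens i f RUnit) f
  | ax_tunitl i f : ax (RTens i RUnit f) f
  | ax_iunit1 i j A B : ax (eta i j A B Unit Unit) (rid (Tens j A B))
  | ax_iunit2 i j A B : ax (eta i j Unit Unit A B) (rid (Tens j A B))
  | ax_eunit1 i j A B : ax (eta i j A Unit B Unit) (rid (Tens i A B))
  | ax_eunit2 i j A B : ax (eta i j Unit A Unit B) (rid (Tens i A B))
  | ax_iassoc i j A B C D E F :
      ax (RComp (RTens i (eta i j A B C D) (rid (Tens j E F)))
                (eta i j (Tens i A C) (Tens i B D) E F))
         (RComp (RTens i (rid (Tens j A B)) (eta i j C D E F))
                (eta i j A B (Tens i C E) (Tens i D F)))
  | ax_eassoc i j A B C D E F :
      ax (RComp (eta i j (Tens j A B) C (Tens j D E) F)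
                (RTens j (eta i j A B D E) (rid (Tens i C F))))
         (RComp (eta i j A (Tens j B C) D (Tens j E F))
                (RTens j (rid (Tens i A D)) (eta i j B C E F)))
  | ax_hex i j k A B C D E F G H :
      ax (RComp (RComp (RTens i (eta j k A B C D) (eta j k E F G H))
                       (eta i k (Tens j A C) (Tens j B D) (Tens j E G) (Tens j F H)))
                (RTens k (eta i j A C E G) (eta i j B D F H)))
         (RComp (RComp (eta i j (Tens k A B) (Tens k C D) (Tens k E F) (Tens k G H))
                       (RTens j (eta i k A B E F) (eta i k C D G H)))
                (eta j k (Tens i A E) (Tens i B F) (Tens i C G) (Tens i D H))).

Inductive req : red -> red -> Prop :=
  | req_ax f g : ax f g -> wf f -> wf g -> req f g
  | req_refl f : wf f -> req f f
  | req_sym f g : req f g -> req g f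
  | req_trans f g h : req f g -> req g h -> req f h
  | req_tens i f f' g g' : req f f' -> req g g' -> req (RTens i f g) (RTens i f' g')
  | req_eta (i j : 'I_n) a a' b b' c c' d d' : (i < j)%N ->
      req a a' -> req b b' -> req c c' -> req d d' ->
      req (REta i j a b c d) (REta i j a' b' c' d')
  | req_comp f f' g g' : req f f' -> req g g' -> teq (tgt f) (src g) ->
      req (RComp f g) (RComp f' g').

End Mn.

(* Main.v *)
Require Import Defs.
From mathcomp Require Import all_boot.
From mathcomp Require Import zify.
From Stdlib Require Import Setoid Morphisms Classical.

Set Implicit Arguments.
Section Aux.
Variables (X : Type) (n : nat).
Notation term := (term X n).
Notation red := (red X n).

Lemma teq_equiv : Equivalence (@teq X n).
Proof. split; [exact: teq_refl| exact: teq_sym| exact: teq_trans]. Qed.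
Existing Instance teq_equiv.

Instance Tens_proper (i : 'I_n) : Proper (@teq X n ==> @teq X n ==> @teq X n) (Tens i).
Proof. by move=> a a' Ha b b' Hb; apply: teq_tens. Qed.

Fixpoint cnt (t : term) : nat :=
  match t with Atom _ => 1 | Unit => 0 | Tens _ a b => cnt a + cnt b end.
Fixpoint msr (t : term) : nat :=
  match t with Atom _ => 0 | Unit => 0
  | Tens i a b => msr a + msr b + cnt a * cnt b * (n - i) end.

Lemma teq_inv (a b : term) : teq a b -> cnt a = cnt b /\ msr a = msr b.
Proof.
elim=> //=; clear a b.
- by move=> a b _ [-> ->].
- by move=> a b c _ [-> ->] _ [-> ->].
- by move=> i a a' b b' _ [-> ->] _ [-> ->].
- move=> i a b c; split; nia.
- move=> i a; split; nia.
- move=> i a; split; nia.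
Qed.

Lemma cnt0 (a : term) : cnt a = 0 -> teq a (Unit X n).
Proof.
elim: a => [x|//|i a IHa b IHb] /=; [by []|move=> _; exact: teq_refl|].
move=> H. rewrite IHa; last lia. rewrite IHb; last lia. exact: teq_unitl.
Qed.

Lemma src_rid (a : term) : src (rid a) = a.
Proof. by elim: a => //= i a -> b ->. Qed.
Lemma tgt_rid (a : term) : tgt (rid a) = a.
Proof. by elim: a => //= i a -> b ->. Qed.
Lemma wf_rid (a : term) : wf (rid a).
Proof. elim: a => /= [x|| i a Ha b Hb]; by constructor. Qed.

Lemma teq_rid (a b : term) : teq a b -> req (rid a) (rid b).
Proof.
elim=> /=; clear a b.
- move=> a; apply: req_refl; exact: wf_rid.
- by move=> a b _ H; apply: req_sym.
- by move=> a b c _ H1 _ H2; apply: req_trans H2.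
- by move=> i a a' b b' _ H1 _ H2; apply: req_tens.
- move=> i a b c; apply: req_ax; first exact: ax_tassoc.
  + by repeat constructor; apply: wf_rid.
  + by repeat constructor; apply: wf_rid.
- move=> i a; apply: req_ax; first exact: ax_tunitr.
  + by repeat constructor; apply: wf_rid.
  + exact: wf_rid.
- move=> i a; apply: req_ax; first exact: ax_tunitl.
  + by repeat constructor; apply: wf_rid.
  + exact: wf_rid.
Qed.

Lemma wf_eta (i j : 'I_n) (A B C D : term) : (i < j)%N -> wf (eta i j A B C D).
Proof. by move=> ij; constructor => //; apply: wf_rid. Qed.

Lemma eta_triv (i j : 'I_n) (A B C D : term) : (i < j)%N ->
  cnt A * cnt D = 0 -> cnt B * cnt C = 0 ->
  req (eta i j A B C D) (rid (Tens i (Tens j A B) (Tens j C D))).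
Proof.
move=> ij H1 H2.
have U : forall Z : term, cnt Z = 0 -> req (rid Z) (RUnit X n).
  by move=> Z HZ; exact (@teq_rid Z (Unit X n) (@cnt0 Z HZ)).
have Rr : forall Z : term, req (rid Z) (rid Z) by move=> Z; apply: req_refl; apply: wf_rid.
have [hA|hD] : cnt A = 0 \/ cnt D = 0 by lia.
- have [hB|hC] : cnt B = 0 \/ cnt C = 0 by lia.
  + apply: (@req_trans _ _ _ (eta i j (Unit X n) (Unit X n) C D)).
      by apply: req_eta; [exact: ij|apply: U|apply: U|apply: Rr|apply: Rr].
    apply: (@req_trans _ _ _ (rid (Tens j C D))).
      by apply: req_ax; [apply: ax_iunit2|apply: wf_eta|apply: wf_rid].
    apply: teq_rid. rewrite (@cnt0 _ hA) (@cnt0 _ hB).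
    apply: teq_sym; repeat (setoid_rewrite teq_unitl || setoid_rewrite teq_unitr); reflexivity.
  + apply: (@req_trans _ _ _ (eta i j (Unit X n) B (Unit X n) D)).
      by apply: req_eta; [exact: ij|apply: U|apply: Rr|apply: U|apply: Rr].
    apply: (@req_trans _ _ _ (rid (Tens i B D))).
      by apply: req_ax; [apply: ax_eunit2|apply: wf_eta|apply: wf_rid].
    apply: teq_rid. rewrite (@cnt0 _ hA) (@cnt0 _ hC).
    apply: teq_sym; repeat (setoid_rewrite teq_unitl || setoid_rewrite teq_unitr); reflexivity.
- have [hB|hC] : cnt B = 0 \/ cnt C = 0 by lia.
  + apply: (@req_trans _ _ _ (eta i j A (Unit X n) C (Unit X n))).
      by apply: req_eta; [exact: ij|apply: Rr|apply: U|apply: Rr|apply: U].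
    apply: (@req_trans _ _ _ (rid (Tens i A C))).
      by apply: req_ax; [apply: ax_eunit1|apply: wf_eta|apply: wf_rid].
    apply: teq_rid. rewrite (@cnt0 _ hD) (@cnt0 _ hB).
    apply: teq_sym; repeat (setoid_rewrite teq_unitl || setoid_rewrite teq_unitr); reflexivity.
  + apply: (@req_trans _ _ _ (eta i j A B (Unit X n) (Unit X n))).
      by apply: req_eta; [exact: ij|apply: Rr|apply: Rr|apply: U|apply: U].
    apply: (@req_trans _ _ _ (rid (Tens j A B))).
      by apply: req_ax; [apply: ax_iunit1|apply: wf_eta|apply: wf_rid].
    apply: teq_rid. rewrite (@cnt0 _ hD) (@cnt0 _ hC).
    apply: teq_sym; repeat (setoid_rewrite teq_unitl || setoid_rewrite teq_unitr); reflexivity.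
Qed.

Lemma main (f : red) : wf f ->
  cnt (src f) = cnt (tgt f) /\ msr (tgt f) <= msr (src f) /\
  (msr (tgt f) = msr (src f) -> req f (rid (src f)) /\ teq (src f) (tgt f)).
Proof.
elim=> /=; clear f.
- move=> x; split=> //; split=> // _; split; [exact: req_refl (wf_atom _ _)|exact: teq_refl].
- split=> //; split=> // _; split; [exact: req_refl (wf_unit _ _)|exact: teq_refl].
- move=> i f g wff [cf [lf ef]] wfg [cg [lg eg]].
  rewrite cf cg; split=> //; split; first lia.
  move=> E. have [Rf Tf] := ef ltac:(lia). have [Rg Tg] := eg ltac:(lia).
  split; last exact: teq_tens.
  exact: req_tens.
- move=> i j a b c d ij wa [ca [la ea]] wb [cb [lb eb]] wc [cc [lc ec]] wd [cd [ld ed]].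
  have wij : (n - j < n - i)%N by have := ltn_ord j; lia.
  rewrite ca cb cc cd; split; first lia.
  set wi := n - i in wij *. set wj := n - j in wij *.
  have key : msr (src a) + msr (src b) + msr (src c) + msr (src d)
      + (cnt (tgt a) * cnt (tgt d) + cnt (tgt b) * cnt (tgt c)) * wi
    = msr (src a) + msr (src b) + cnt (tgt a) * cnt (tgt b) * wj
      + (msr (src c) + msr (src d) + cnt (tgt c) * cnt (tgt d) * wj)
      + (cnt (tgt a) + cnt (tgt b)) * (cnt (tgt c) + cnt (tgt d)) * wi
      - (cnt (tgt a) * cnt (tgt b) + cnt (tgt c) * cnt (tgt d)) * wj
      - (cnt (tgt a) * cnt (tgt c) + cnt (tgt b) * cnt (tgt d)) * wi.
    nia.
  split; first nia.
  move=> E.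
  have hP1 : cnt (tgt a) * cnt (tgt d) = 0 by nia.
  have hP2 : cnt (tgt b) * cnt (tgt c) = 0 by nia.
  have [Ra Ta] := ea ltac:(nia). have [Rb Tb] := eb ltac:(nia).
  have [Rc Tc] := ec ltac:(nia). have [Rd Td] := ed ltac:(nia).
  split.
  + apply: (@req_trans _ _ _ (eta i j (src a) (src b) (src c) (src d))).
      exact: req_eta.
    apply: eta_triv => //; by rewrite ?ca ?cb ?cc ?cd.
  + rewrite -ca -cd in hP1. rewrite -cb -cc in hP2.
    rewrite -Ta -Tb -Tc -Td.
    have hAD : cnt (src a) = 0 \/ cnt (src d) = 0 by lia.
    have hBC : cnt (src b) = 0 \/ cnt (src c) = 0 by lia.
    case: hAD => [/cnt0 hA|/cnt0 hD]; case: hBC => [/cnt0 hB|/cnt0 hC];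
    repeat (first [setoid_rewrite hA|setoid_rewrite hB|setoid_rewrite hC|setoid_rewrite hD
                  |setoid_rewrite teq_unitl|setoid_rewrite teq_unitr]); reflexivity.
- move=> f g wff [cf [lf ef]] wfg [cg [lg eg]] T.
  have [c1 m1] := teq_inv T.
  split; first lia. split; first lia.
  move=> E. have [Rf Tf] := ef ltac:(lia). have [Rg Tg] := eg ltac:(lia).
  split; last exact: (teq_trans Tf (teq_trans T Tg)).
  apply: (@req_trans _ _ _ (RComp (rid (src f)) (rid (src g)))).
    by apply: req_comp.
  apply: (@req_trans _ _ _ (rid (src g))).
    apply: req_ax; first exact: ax_idl.
    + constructor; try exact: wf_rid. rewrite src_rid tgt_rid; exact: teq_trans Tf T.
    + exact: wf_rid.
  apply: teq_rid. exact: teq_sym (teq_trans Tf T).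
Qed.

End Aux.

Lemma stabilize (h : nat -> nat) : (forall k, h k.+1 <= h k) ->
  exists N, forall k, (N <= k)%N -> h k = h N.
Proof.
move: {2}(h 0) (leqnn (h 0)) => v; elim: v h => [|v IH] h hv hd.
- exists 0 => k _. have: forall k, h k <= h 0.
    by elim=> // m IHm; exact: leq_trans (hd m) IHm.
  move=> /(_ k); lia.
- have mono : forall k m, (k <= m)%N -> h m <= h k.
    move=> k m /subnKC <-; elim: (m - k) => [|d IHd]; first by rewrite addn0.
    by rewrite addnS; exact: leq_trans (hd _) IHd.
  destruct (classic (forall k, h k = h 0)) as [Hall|Hn].
    by exists 0 => k _; rewrite Hall.
  have [k Hk] := not_all_ex_not _ _ Hn.
  have lt : h k < h 0 by have := mono 0 k isT; lia.
  have [N HN] := IH (fun m => h (k + m)) ltac:(simpl; rewrite addn0; lia)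
                   ltac:(move=> m /=; rewrite addnS; exact: hd).
  exists (k + N) => m Hm.
  have := HN (m - k) ltac:(lia). by rewrite subnKC; [|lia].
Qed.

Theorem proposition5p4 (n : nat) (hn : (1 <= n)%N) (X : Type)
    (t : nat -> term X n) (alpha : nat -> red X n) :
  (forall k, wf (alpha k)) ->
  (forall k, teq (src (alpha k)) (t k)) ->
  (forall k, teq (tgt (alpha k)) (t k.+1)) ->
  exists N, forall k, (N <= k)%N -> req (alpha k) (rid (t k)).
Proof.
move=> Hwf Hs Ht.
have dec : forall k, msr (t k.+1) <= msr (t k).
  move=> k. have [_ [l _]] := main (Hwf k).
  have [_ <-] := teq_inv (Hs k). have [_ <-] := teq_inv (Ht k). exact: l.
have [N HN] := @stabilize (fun k => msr (t k)) dec.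
exists N => k Hk.
have [_ [_ e]] := main (Hwf k).
have [_ E1] := teq_inv (Hs k). have [_ E2] := teq_inv (Ht k).
have [R _] : req (alpha k) (rid (src (alpha k))) /\ teq (src (alpha k)) (tgt (alpha k)).
  apply: e. rewrite E1 E2 (HN k Hk) (HN k.+1 (leqW Hk)). done.
apply: req_trans R _. exact: teq_rid.
Qed.
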